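(* Assume the payoffs are normalized so that $T=1$, $S=0$ (hence $1>R>\tfrac12$ and $R>P>0$), and let $\bar\alpha>0$. Put $\bar\beta=-\bar\alpha-R^{-1}$. Among all memory-one strategies $\mathbf p\in[0,1]^4$ whose X Press-Dyson vector has the form $\mathbf p-(1,1,0,0)=\gamma(\bar\alpha\mathbf S_X+\bar\beta\mathbf S_Y+\mathbf 1)$ with $\gamma>0$, the one with the largest $\gamma$ (the associated agreeable zero-determinant top strategy) is $$\mathbf p=\Big(1,\ \frac{2R-1}{R(\bar\alpha+1)},\ 1,\ \frac{R-P}{R(\bar\alpha+1)}\Big).$$
   Context: Iterated Prisoner's Dilemma with normalized payoffs $T=1>R>P>S=0$ and $2R>1$; outcomes ordered $cc,cd,dc,dd$ (first letter X's play, second Y's); payoff vectors $\mathbf S_X=(R,0,1,P)$, $\mathbf S_Y=(R,1,0,P)$, $\mathbf 1=(1,1,1,1)$. A memory-one strategy for X is $\mathbf p=(p_1,\dots,p_4)\in[0,1]^4$, $p_i$ being the probability X plays $c$ after outcome $i$ of the previous round; its X Press-Dyson vector is $\tilde{\mathbf p}=\mathbf p-(1,1,0,0)$. *)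

(* Defs.v *)
From mathcomp Require Import all_boot all_order all_algebra.
Set Implicit Arguments. Unset Strict Implicit. Unset Printing Implicit Defensive.
Import Order.TTheory GRing.Theory Num.Theory.
Local Open Scope ring_scope.

(* Vectors indexed by outcomes cc, cd, dc, dd (indices 0,1,2,3). *)
Definition vec4 (F : ringType) (a b c d : F) : 'rV[F]_4 :=
  \row_(i < 4) nth 0 [:: a; b; c; d] i.

(* Normalized payoffs T = 1, S = 0; Rw is the reward R, Pp the punishment P. *)
Definition S_X (F : ringType) (Rw Pp : F) : 'rV[F]_4 := vec4 Rw 0 1 Pp.
Definition S_Y (F : ringType) (Rw Pp : F) : 'rV[F]_4 := vec4 Rw 1 0 Pp.
Definition one4 (F : ringType) : 'rV[F]_4 := vec4 1 1 1 1.

Definition memory_one (F : realDomainType) (p : 'rV[F]_4) : Prop :=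
  forall i : 'I_4, 0 <= p ord0 i <= 1.

Definition PD_X (F : ringType) (p : 'rV[F]_4) : 'rV[F]_4 := p - vec4 1 1 0 0.

Definition ZD_form (F : realDomainType) (Rw Pp a b g : F) (p : 'rV[F]_4) : Prop :=
  memory_one p /\ 0 < g /\
  PD_X p = g *: (a *: S_X Rw Pp + b *: S_Y Rw Pp + one4 F).

(* Main.v *)
Require Import Defs.
From mathcomp Require Import all_boot all_order all_algebra.
From mathcomp Require Import ring lra.
Import Order.TTheory GRing.Theory Num.Theory.
Local Open Scope ring_scope.

Lemma zd_comp (F : realFieldType) (Rw Pp a b g : F) (p : 'rV[F]_4) :
  PD_X p = g *: (a *: S_X Rw Pp + b *: S_Y Rw Pp + one4 F) <->
  [/\ p ord0 0 - 1 = g * (a * Rw + b * Rw + 1),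
      p ord0 1 - 1 = g * (a * 0 + b * 1 + 1),
      p ord0 2 - 0 = g * (a * 1 + b * 0 + 1) &
      p ord0 3 - 0 = g * (a * Pp + b * Pp + 1)].
Proof.
split.
  move=> H; have E i : p ord0 i - vec4 1 1 0 0 ord0 i =
     g * (a * S_X Rw Pp ord0 i + b * S_Y Rw Pp ord0 i + one4 F ord0 i).
    by move/matrixP: H => /(_ ord0 i); rewrite /PD_X !mxE.
  by split; [have := E 0|have := E 1|have := E 2|have := E 3];
     rewrite /S_X /S_Y /one4 /vec4 !mxE.
move=> [E0 E1 E2 E3]; apply/matrixP => i j; rewrite (ord1 i) /PD_X !mxE.
case: j => [[|[|[|[|j]]]] Hj] /=; [rewrite -E0|rewrite -E1|rewrite -E2|rewrite -E3|by []]; by congr (p _ _ - _); apply: val_inj.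
Qed.


Theorem proposition2p6 (F : realFieldType) (Rw Pp abar : F)
  (hR1 : Rw < 1) (hR2 : 1 < 2 * Rw) (hRP : Pp < Rw) (hP0 : 0 < Pp)
  (ha : 0 < abar) :
  let bbar := - abar - Rw^-1 in
  let p0 := vec4 1 ((2 * Rw - 1) / (Rw * (abar + 1))) 1
                 ((Rw - Pp) / (Rw * (abar + 1))) in
  exists g0 : F,
    ZD_form Rw Pp abar bbar g0 p0 /\
    (forall (p : 'rV[F]_4) (g : F), ZD_form Rw Pp abar bbar g p ->
       g <= g0 /\ (g = g0 -> p = p0)).
Proof.
move=> bbar p0.
have R0 : Rw != 0 by apply/negP=> /eqP E; lra.
have A0 : abar + 1 != 0 by apply/negP=> /eqP E; lra.
have Rp : 0 < Rw by lra.
have Ap : 0 < abar + 1 by lra.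
have RA0 : 0 < Rw * (abar + 1) by apply: mulr_gt0.
exists (abar + 1)^-1; split.
  split; last split.
  - move=> i; rewrite /p0 /vec4 mxE.
    case: i => [[|[|[|[|i]]]] Hi] /=; rewrite ?ler01 ?lexx //.
    + rewrite divr_ge0 ?ler_pdivrMr //= ?mul1r; [nra|lra|nra].
    + rewrite divr_ge0 ?ler_pdivrMr //= ?mul1r; [nra|lra|nra].
  - by rewrite invr_gt0.
  apply/zd_comp; rewrite /p0 /vec4 !mxE /=; split; rewrite /bbar; field;
    by rewrite ?R0 ?A0.
move=> p g [Hm [Hg /zd_comp [E0 E1 E2 E3]]].
have H2 := Hm 2.
rewrite subr0 in E2; rewrite subr0 in E3.
have Hle : g <= (abar + 1)^-1.
  rewrite -(ler_pM2r Ap) mulVf //; move: H2; rewrite E2 => /andP [_]; lra.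
split => // Eg.
apply/matrixP => i j; rewrite (ord1 i) /p0 /vec4 mxE.
case: j => [[|[|[|[|j]]]] Hj] /=.
- have -> : Ordinal Hj = 0 by apply: val_inj.
  apply/(subIr 1); rewrite E0 subrr /bbar; field; by rewrite ?R0.
- have -> : Ordinal Hj = 1 by apply: val_inj.
  apply/(subIr 1); rewrite E1 Eg /bbar; field; by rewrite ?R0 ?A0.
- have -> : Ordinal Hj = 2 by apply: val_inj.
  rewrite E2 Eg; field; by rewrite ?A0.
- have -> : Ordinal Hj = 3 by apply: val_inj.
  rewrite E3 Eg /bbar; field; by rewrite ?R0 ?A0.
- by [].
Qed.
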